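(* Let $N$ be an absolute prime with $n\ge 2$ decimal digits. Then either $N=A_n$ is a repunit, or there exist distinct digits $a,b\in\{1,3,7,9\}$ such that $N$ is obtained by a permutation of the digits of $B_n(a,b)$; equivalently, exactly $n-1$ of the digits of $N$ equal $a$ and the remaining one equals $b$.
   Context: For a positive integer $N$ with decimal representation $d_1d_2\dots d_n$ (digits $d_k\in\{0,\dots,9\}$, $d_1\neq 0$), a permutation of the digits of $N$ is any integer $\sum_{k=1}^{n} d_{\sigma(k)}10^{n-k}$ with $\sigma$ a permutation of $\{1,\dots,n\}$. $N$ is called an absolute prime if every integer obtained by a permutation of the digits of $N$ (including $N$ itself) is prime. The repunit $A_n=(10^n-1)/9$ is the $n$-digit integer all of whose digits are $1$. For digits $a,b$ and $n\ge 1$, $B_n(a,b)=a\cdot A_n+(b-a)$ is the $n$-digit integer whose first $n-1$ digits are $a$ and whose last digit is $b$. *)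

(* Defs.v *)
From mathcomp Require Import all_boot.
Set Implicit Arguments. Unset Strict Implicit. Unset Printing Implicit Defensive.

Fixpoint rev_digits_aux (fuel n : nat) : seq nat :=
  match fuel with
  | 0 => [::]
  | f.+1 => if n == 0 then [::] else (n %% 10) :: rev_digits_aux f (n %/ 10)
  end.

(* decimal representation d_1 d_2 ... d_n of n (most significant first);
   digits 0 = [::] *)
Definition digits (n : nat) : seq nat := rev (rev_digits_aux n n).

Definition digits_value (s : seq nat) : nat := foldl (fun acc d => acc * 10 + d) 0 s.

Definition absolute_prime (N : nat) : Prop :=
  0 < N /\ forall t : seq nat, perm_eq t (digits N) -> prime (digits_value t).

Definition repunit (n : nat) : nat := (10 ^ n - 1) %/ 9.

(* B_n(a,b) = a * A_n + (b - a), written in nat as a*A_n - a + b (n >= 1) *)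
Definition Bn (n a b : nat) : nat := a * repunit n - a + b.

(* Main.v *)
Require Import Defs.
From mathcomp Require Import all_boot.
From mathcomp Require Import zify.
Set Implicit Arguments. Unset Strict Implicit. Unset Printing Implicit Defensive.

Definition stepf (acc d : nat) := acc * 10 + d.

Lemma dv_cat r t : digits_value (r ++ t) = foldl stepf (digits_value r) t.
Proof. by rewrite /digits_value foldl_cat. Qed.

Lemma dv_rcons r d : digits_value (rcons r d) = digits_value r * 10 + d.
Proof. by rewrite -cats1 dv_cat. Qed.

Definition vp p u t := foldl (fun a d => (a * 10 + d) %% p) u t.

Lemma foldl_mod p x t : foldl stepf x t %% p = vp p (x %% p) t.
Proof.
elim: t x => [|d t IH] x /=; first by [].
rewrite IH /stepf; congr (vp _ _ t).
by rewrite -[in RHS]modnDml modnMml modnDml.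
Qed.

Lemma dv_mod p t : digits_value t %% p = vp p 0 t.
Proof. by rewrite (foldl_mod p 0 t) mod0n. Qed.

Lemma vp_cat p u a b : vp p u (a ++ b) = vp p (vp p u a) b.
Proof. by rewrite /vp foldl_cat. Qed.

Lemma foldl_ge acc t : acc * 10 ^ size t <= foldl stepf acc t.
Proof.
elim: t acc => [|d t IH] acc /=; first by rewrite muln1.
apply: leq_trans (IH _). rewrite expnS /stepf. nia.
Qed.

Lemma dv_lb l : 0 < head 0 l -> 10 ^ (size l).-1 <= digits_value l.
Proof.
case: l => [|x l] //= Hx.
have := foldl_ge x l. rewrite /digits_value /= add0n => H.
apply: leq_trans H. nia.
Qed.

Lemma aux_ok f n : n <= f ->
  digits_value (rev (rev_digits_aux f n)) = n /\ all (fun d => d < 10) (rev_digits_aux f n).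
Proof.
elim: f n => [|f IH] n Hn /=.
  by have -> : n = 0 by lia.
case: eqP => [->|Hn0] //.
have [H1 H2] := IH (n %/ 10) ltac:(lia).
rewrite rev_cons dv_rcons H1 /= H2 ltn_pmod // andbT; split => //.
by rewrite {3}(divn_eq n 10).
Qed.

Lemma digits_ok N : digits_value (digits N) = N /\ all (fun d => d < 10) (digits N).
Proof. by have [? ?] := aux_ok (leqnn N); rewrite /digits all_rev. Qed.

Lemma aux_inv l : all (fun d => d < 10) l -> (0 < head 0 l \/ l = [::]) ->
  forall f, digits_value l <= f -> rev_digits_aux f (digits_value l) = rev l.
Proof.
elim/last_ind: l => [|l d IH] Hall Hh f Hf.
  by case: f {Hf}.
rewrite all_rcons in Hall; case/andP: Hall => Hd Hall.
rewrite dv_rcons in Hf *.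
have Hpos : 0 < digits_value l * 10 + d.
  case: l IH Hh Hf Hall => [|x l] IH Hh Hf Hall.
    case: Hh => //=.
  case: Hh => //= Hx.
  have := dv_lb (l := x :: l) Hx. lia.
case: f Hf => [|f] Hf; first lia.
rewrite /=.
have -> : (digits_value l * 10 + d == 0) = false by lia.
rewrite rev_rcons modnMDl modn_small // divnMDl // divn_small // addn0.
congr (_ :: _); apply: IH => //.
  case: l {Hpos Hf} Hh Hall => [|x l] Hh Hall; [by right|left].
  by case: Hh.
lia.
Qed.

Lemma digits_inv l : all (fun d => d < 10) l -> 0 < head 0 l -> digits (digits_value l) = l.
Proof. move=> H1 H2; by rewrite /digits aux_inv ?revK //; left. Qed.

Lemma dv_nseq1 n acc : 9 * foldl stepf acc (nseq n 1) + 1 = (9 * acc + 1) * 10 ^ n.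
Proof.
elim: n acc => [|n IH] acc /=; first by rewrite muln1.
rewrite IH /stepf expnS. nia.
Qed.

Lemma repunitE n : repunit n = digits_value (nseq n 1).
Proof.
have := dv_nseq1 n 0; rewrite muln0 add0n mul1n /repunit => <-.
by rewrite addnK mulKn.
Qed.

Lemma dv_nseq_a a n acc : foldl stepf (a * acc) (nseq n a) = a * foldl stepf acc (nseq n 1).
Proof.
elim: n acc => //= n IH acc. rewrite -IH /stepf. congr (foldl _ _ _). nia.
Qed.

Lemma dv_nseq a n : digits_value (nseq n a) = a * digits_value (nseq n 1).
Proof. have := dv_nseq_a a n 0. by rewrite muln0. Qed.

Lemma nseqS' n (x : nat) : nseq n.+1 x = rcons (nseq n x) x.
Proof. by elim: n => //= n ->. Qed.

Lemma nseqD' m n (x : nat) : nseq (m + n) x = nseq m x ++ nseq n x.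
Proof. by elim: m => //= m ->. Qed.

Lemma digits_Bn n a b : 0 < a < 10 -> 0 < b < 10 -> 0 < n ->
  digits (Bn n a b) = rcons (nseq n.-1 a) b.
Proof.
move=> Ha Hb; case: n => // n _ /=.
have -> : Bn n.+1 a b = digits_value (rcons (nseq n a) b).
  rewrite /Bn repunitE nseqS' !dv_rcons (dv_nseq a).
  by rewrite mulnDr muln1 addnK mulnA.
apply: digits_inv.
  rewrite all_rcons all_nseq. lia.
case: n => /=; lia.
Qed.

Lemma prime_dvd_eq p v : prime v -> 1 < p -> p %| v -> p = v.
Proof. move=> /primeP[_ H] p1 /H /orP[/eqP|/eqP] //; lia. Qed.

Definition D := [:: 1; 3; 7; 9].

Lemma perm_counts (s t : seq nat) : all (mem D) s -> all (mem D) t ->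
  (forall x, x \in D -> count_mem x s = count_mem x t) -> perm_eq s t.
Proof.
move=> hs ht H. apply/allP => x; rewrite mem_cat => /orP[] hx /=; apply/eqP; apply: H.
  exact: (allP hs). exact: (allP ht).
Qed.

Lemma submulti (m s : seq nat) : (forall x, count_mem x m <= count_mem x s) ->
  exists r, perm_eq s (r ++ m).
Proof.
elim: m s => [|x m IH] s H. by exists s; rewrite cats0.
have xs : x \in s.
  rewrite -has_pred1 has_count; have := H x; rewrite /= eqxx; lia.
have Hp := perm_to_rem xs.
have [r Hr] : exists r, perm_eq (rem x s) (r ++ m).
  apply: IH => y. have := H y. move/permP: Hp => Hp'. rewrite (Hp' (pred1 y)) /=.
  by rewrite leq_add2l.
exists r. apply: (perm_trans Hp).
apply: (@perm_trans _ (x :: (r ++ m))); first by rewrite perm_cons.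
by rewrite (perm_catCA [:: x] r m).
Qed.

Definition coverp p U m := all (fun u => has (fun t => vp p u t == 0) (permutations m)) U.

Lemma head_pos l : all (fun d => 0 < d) l -> 0 < size l -> 0 < head 0 l.
Proof. by case: l => //= x l /andP[]. Qed.

Lemma kill p s r m U : 1 < p -> (forall t, perm_eq t s -> prime (digits_value t)) ->
  perm_eq s (r ++ m) -> digits_value r %% p \in U -> coverp p U m ->
  all (fun d => 0 < d) s -> p < 10 ^ (size s).-1 -> False.
Proof.
move=> p1 Hp Hs HU Hc Hnz Hb.
have /hasP[t] := allP Hc _ HU. rewrite mem_permutations => Ht /eqP Ht0.
have Hst : perm_eq (r ++ t) s.
  rewrite perm_sym (perm_trans Hs) // perm_cat2l perm_sym //.
have Hpr := Hp _ Hst.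
have Hd : p %| digits_value (r ++ t) by rewrite /dvdn dv_cat foldl_mod Ht0.
have Heq := prime_dvd_eq Hpr p1 Hd.
have Hnz' : all (fun d => 0 < d) (r ++ t) by rewrite (perm_all _ Hst).
have Hsz : size (r ++ t) = size s := perm_size Hst.
have Hs0 : 0 < size s.
  case: (size s) Hb => //=; lia.
have Hs1 : 0 < size (r ++ t) by lia.
have := dv_lb (head_pos Hnz' Hs1). rewrite Hsz -Heq. lia.
Qed.

Lemma digit_cases x : x < 10 -> x \in D \/ 2 %| x \/ 5 %| x.
Proof.
case: x => [|[|[|[|[|[|[|[|[|[|x]]]]]]]]]] // _;
  do ![by left | by right; left | by right; right].
Qed.

Lemma stepD s : (forall t, perm_eq t s -> prime (digits_value t)) ->
  all (fun d => d < 10) s -> 2 <= size s -> all (mem D) s /\ all (fun d => 0 < d) s.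
Proof.
move=> Hp H10 H2.
have gen : forall x q, x \in s -> 1 < q < 10 -> q %| 10 -> q %| x ->
    (all (fun d => 0 < d) (rem x s) \/ x = 0) -> False.
  move=> x q hx /andP[q1 q9] q10 qx Hnz.
  have Ht : perm_eq (rcons (rem x s) x) s.
    by rewrite perm_rcons perm_sym perm_to_rem.
  have Hpr := Hp _ Ht. rewrite dv_rcons in Hpr.
  have Hd : q %| digits_value (rem x s) * 10 + x.
    by rewrite dvdn_add // dvdn_mull.
  have Heq := prime_dvd_eq Hpr q1 Hd.
  have Hq10 : q <= 10 by apply: dvdn_leq.
  have Hsz : size (rem x s) = (size s).-1 by rewrite size_rem.
  case: Hnz => [Hnz|Hx0].
    have Hs1 : 0 < size (rem x s) by lia.
    have : 0 < 10 ^ (size (rem x s)).-1 by rewrite expn_gt0.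
    have := dv_lb (head_pos Hnz Hs1). lia.
  subst x. rewrite addn0 in Heq.
  move: Heq. case: (digits_value (rem 0 s)) => [|k]; lia.
have H0 : 0 \notin s.
  apply/negP => h. apply: (gen 0 2) => //. by right.
have Hnz : all (fun d => 0 < d) s.
  apply/allP => x hx; rewrite lt0n; apply/negP => /eqP e; subst.
  by rewrite hx in H0.
split => //.
apply/allP => x hx.
have Hr : all (fun d => 0 < d) (rem x s).
  apply/allP => y hy; apply: (allP Hnz); exact: (mem_rem hy).
have [//|[hx'|hx']] := digit_cases (allP H10 x hx).
  by exfalso; apply: (gen x 2) => //; left.
by exfalso; apply: (gen x 5) => //; left.
Qed.

Lemma sizeD (s : seq nat) : all (mem D) s ->
  size s = count_mem 1 s + count_mem 3 s + count_mem 7 s + count_mem 9 s.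
Proof.
elim: s => //= y s IH /andP[hy hs]. rewrite IH //.
move: hy; rewrite /D !inE => /orP[/eqP->|/orP[/eqP->|/orP[/eqP->|/eqP->]]] /=; lia.
Qed.

Lemma period d L : vp 7 0 (nseq 6 d) = 0 ->
  digits_value (nseq L d) %% 7 = digits_value (nseq (L %% 6) d) %% 7.
Proof.
move=> H. rewrite !dv_mod {1}(divn_eq L 6) nseqD' vp_cat.
have -> : vp 7 0 (nseq (L %/ 6 * 6) d) = 0.
  elim: (L %/ 6) => // q IH. by rewrite mulSn nseqD' vp_cat H IH.
by [].
Qed.

Definition famU d := [seq digits_value (nseq i d) %% 7 | i <- iota 0 6].

Lemma famU_mem d L : vp 7 0 (nseq 6 d) = 0 -> digits_value (nseq L d) %% 7 \in famU d.
Proof.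
move=> H; rewrite period //; apply/mapP; exists (L %% 6) => //.
rewrite mem_iota add0n ltn_pmod //.
Qed.

Definition COV : seq (seq nat) := [:: [:: 1; 1; 3; 7]; [:: 1; 3; 3; 7]; [:: 1; 3; 7; 7]; [:: 1; 3; 7; 9]; [:: 3; 3; 7; 9]; [:: 3; 7; 7; 9]; [:: 3; 7; 9; 9]; [:: 1; 1; 1; 3; 3]; [:: 1; 1; 1; 3; 7]; [:: 1; 1; 1; 3; 9]; [:: 1; 1; 1; 7; 7]; [:: 1; 1; 1; 9; 9]; [:: 1; 1; 3; 3; 3]; [:: 1; 1; 3; 3; 7]; [:: 1; 1; 3; 3; 9]; [:: 1; 1; 3; 7; 7]; [:: 1; 1; 3; 7; 9]; [:: 1; 1; 3; 9; 9]; [:: 1; 1; 7; 7; 7]; [:: 1; 1; 7; 7; 9]; [:: 1; 1; 7; 9; 9]; [:: 1; 1; 9; 9; 9]; [:: 1; 3; 3; 3; 7]; [:: 1; 3; 3; 3; 9]; [:: 1; 3; 3; 7; 7]; [:: 1; 3; 3; 7; 9]; [:: 1; 3; 3; 9; 9]; [:: 1; 3; 7; 7; 7]; [:: 1; 3; 7; 7; 9]; [:: 1; 3; 7; 9; 9]; [:: 1; 7; 7; 7; 9]; [:: 1; 7; 7; 9; 9]; [:: 1; 7; 9; 9; 9]; [:: 3; 3; 3; 7; 7]; [:: 3; 3; 3; 7; 9]; [:: 3; 3; 3; 9; 9]; [:: 3; 3; 7; 7; 7]; [:: 3; 3; 7; 7; 9]; [:: 3; 3; 7; 9; 9]; [::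 3; 3; 9; 9; 9]; [:: 3; 7; 7; 7; 9]; [:: 3; 7; 7; 9; 9]; [:: 3; 7; 9; 9; 9]; [:: 7; 7; 7; 9; 9]; [:: 7; 7; 9; 9; 9]].

Definition RES : seq (seq nat) := [:: [:: 1; 3; 7]; [:: 1; 3; 9]; [:: 1; 7; 9]; [:: 3; 7; 9]; [:: 1; 1; 3; 3]; [:: 1; 1; 3; 9]; [:: 1; 1; 7; 7]; [:: 1; 1; 7; 9]; [:: 1; 1; 9; 9]; [:: 1; 3; 3; 9]; [:: 1; 3; 9; 9]; [:: 1; 7; 7; 9]; [:: 1; 7; 9; 9]; [:: 3; 3; 7; 7]; [:: 3; 3; 9; 9]; [:: 7; 7; 9; 9]; [:: 1; 1; 1; 7; 9]; [:: 1; 1; 1; 1; 7; 9]; [:: 1; 3; 9; 9; 9]; [:: 1; 3; 9; 9; 9; 9]].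

Lemma cov_ok : all (fun m => all (mem D) m && coverp 7 (iota 0 7) m) COV.
Proof. vm_compute. reflexivity. Qed.

Lemma res_ok : all (fun m => [&& all (mem D) m, all (fun x => count_mem x m < 6) D,
   2 < size m & has (fun p => (1 < p <= 13) && coverp p [:: 0] m) [:: 7; 13]]) RES.
Proof. vm_compute. reflexivity. Qed.

Lemma famB_ok : vp 7 0 (nseq 6 1) = 0 /\ coverp 7 (famU 1) [:: 1; 1; 1; 1; 1; 7; 9].
Proof. split; vm_compute; reflexivity. Qed.

Lemma famC_ok : vp 7 0 (nseq 6 9) = 0 /\ coverp 7 (famU 9) [:: 1; 3; 9; 9; 9; 9; 9].
Proof. split; vm_compute; reflexivity. Qed.

Definition vec (v1 v3 v7 v9 : nat) (x : nat) :=
  if x == 1 then v1 else if x == 3 then v3 else if x == 7 then v7 else v9.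

Definition only1 (v : nat -> nat) := has (fun a => all (fun x => (x == a) || (v x == 0)) D) D.
Definition pairb (v : nat -> nat) := has (fun a => has (fun b =>
   [&& a != b, v b == 1 & all (fun x => [|| x == a, x == b | v x == 0]) D]) D) D.
Definition covb (v : nat -> nat) := has (fun m => all (fun x => count_mem x m <= v x) D) COV.
Definition famB (v : nat -> nat) := [&& 5 <= v 1, v 3 == 0, v 7 == 1 & v 9 == 1].
Definition famC (v : nat -> nat) := [&& 5 <= v 9, v 1 == 1, v 3 == 1 & v 7 == 0].
Definition resb (v : nat -> nat) := has (fun m => all (fun x => count_mem x m == v x) D) RES.

Definition goodv v1 v3 v7 v9 := let v := vec v1 v3 v7 v9 in
  [|| only1 v, pairb v, covb v, famB v, famC v | resb v].

Lemma good_all_b : all (fun v1 => all (fun v3 => all (fun v7 => all (fun v9 =>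
  goodv v1 v3 v7 v9) (iota 0 7)) (iota 0 7)) (iota 0 7)) (iota 0 7).
Proof. vm_compute. reflexivity. Qed.

Lemma good_all a b c d : a < 7 -> b < 7 -> c < 7 -> d < 7 -> goodv a b c d.
Proof.
move=> ha hb hc hd.
have := good_all_b.
move=> /allP /(_ a) H; have := H ltac:(by rewrite mem_iota).
move=> /allP /(_ b) {}H; have := H ltac:(by rewrite mem_iota).
move=> /allP /(_ c) {}H; have := H ltac:(by rewrite mem_iota).
move=> /allP /(_ d) {}H; exact: (H ltac:(by rewrite mem_iota)).
Qed.

Ltac eqs := repeat match goal with H : is_true (@eq_op _ _ _) |- _ => move/eqnP: H => H end.
Ltac abs1 k l := let c := fresh "c" in try (set (c := count_mem k l) in * ).
Ltac abs l := abs1 1 l; abs1 3 l; abs1 7 l; abs1 9 l.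
Ltac slia := eqs; lia.

Lemma pow10_ge k : 1 <= k -> 10 <= 10 ^ k.
Proof. by case: k => // k _; rewrite expnS leq_pmulr ?expn_gt0. Qed.

Lemma pow100_ge k : 2 <= k -> 100 <= 10 ^ k.
Proof. case: k => [|[|k]] // _; rewrite !expnS mulnA leq_pmulr ?expn_gt0 //. Qed.

Lemma core (s : seq nat) : (forall t, perm_eq t s -> prime (digits_value t)) ->
  all (fun d => d < 10) s -> 2 <= size s ->
  digits_value s = repunit (size s) \/
  exists a b : nat, [/\ a \in [:: 1; 3; 7; 9], b \in [:: 1; 3; 7; 9], a != b &
    perm_eq s (digits (Bn (size s) a b))].
Proof.
move=> Hp H10 H2.
have [HD Hnz] := stepD Hp H10 H2.
have Hsz := sizeD HD. rewrite /= in Hsz.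
have Hb7 : 7 < 10 ^ (size s).-1.
  have := pow10_ge (k := (size s).-1) ltac:(lia). slia.
have Hg := @good_all (minn (count_mem 1 s) 6) (minn (count_mem 3 s) 6)
  (minn (count_mem 7 s) 6) (minn (count_mem 9 s) 6) ltac:(lia) ltac:(lia) ltac:(lia) ltac:(lia).
rewrite /goodv in Hg.
case/orP: Hg => [Hg|/orP[Hg|/orP[Hg|/orP[Hg|/orP[Hg|Hg]]]]].
-
  case/hasP: Hg => a Ha /allP Hx.
  have h1 := Hx 1 isT; have h3 := Hx 3 isT; have h7 := Hx 7 isT; have h9 := Hx 9 isT.
  rewrite /vec /= in h1 h3 h7 h9.
  have Hperm : perm_eq s (nseq (size s) a).
    apply: perm_counts => //; first by rewrite all_nseq; apply/orP; right.
    move: Ha h1 h3 h7 h9; rewrite /D !inE => /or4P[]/eqP-> /= h1 h3 h7 h9 x;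
    rewrite !inE => /or4P[]/eqP-> ; rewrite count_nseq /=; slia.
  have Hs : s = nseq (size s) a.
    apply/all_pred1P. by rewrite (perm_all _ Hperm) all_nseq /= eqxx orbT.
  have HR := dv_lb (l := nseq (size s) 1) ltac:(case: (size s) H2 => //).
  rewrite size_nseq in HR.
  have HR10 := pow10_ge (k := (size s).-1) ltac:(lia).
  move: Ha; rewrite /D !inE => /or4P[]/eqP Ha; subst a.
  + by left; rewrite {1}Hs repunitE.
  + exfalso. have Hpr := Hp s (perm_refl s). rewrite Hs dv_nseq in Hpr.
    have := prime_dvd_eq Hpr (isT : 1 < 3) (dvdn_mulr _ (dvdnn 3)). slia.
  + exfalso. have Hpr := Hp s (perm_refl s). rewrite Hs dv_nseq in Hpr.
    have := prime_dvd_eq Hpr (isT : 1 < 7) (dvdn_mulr _ (dvdnn 7)). slia.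
  + exfalso. have Hpr := Hp s (perm_refl s). rewrite Hs dv_nseq in Hpr.
    have := prime_dvd_eq Hpr (isT : 1 < 3) (dvdn_mulr _ (isT : 3 %| 9)). slia.
-
  case/hasP: Hg => a Ha /hasP[b Hb /and3P[Hab Hb1 /allP Hx]].
  have h1 := Hx 1 isT; have h3 := Hx 3 isT; have h7 := Hx 7 isT; have h9 := Hx 9 isT.
  rewrite /vec /= in h1 h3 h7 h9 Hb1.
  right; exists a, b; split => //.
  move: Ha Hb Hab Hb1 h1 h3 h7 h9; rewrite /D !inE =>
    /or4P[]/eqP-> /or4P[]/eqP-> //= Hab Hb1 h1 h3 h7 h9;
  (rewrite digits_Bn //; last lia);
  (apply: perm_counts => //; first by rewrite all_rcons all_nseq orbT);
  move=> x; rewrite !inE => /or4P[]/eqP->; rewrite -cats1 count_cat count_nseq /=; slia.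
-
  case/hasP: Hg => m Hm /allP Hle.
  have /andP[HmD Hcov] := allP cov_ok m Hm.
  have [r Hr] : exists r, perm_eq s (r ++ m).
    apply: submulti => x.
    case: (boolP (x \in D)) => hxD.
      move: hxD (Hle x hxD); rewrite /D !inE => /or4P[]/eqP->; rewrite /vec /=; slia.
    have : x \notin m by apply/negP => /(allP HmD) h; move/negP: hxD; apply.
    by move/count_memPn ->.
  exfalso; apply: (kill (p := 7) isT Hp Hr _ Hcov Hnz Hb7).
  by rewrite mem_iota add0n ltn_pmod.
-
  exfalso. move: Hg; rewrite /famB /vec /= => /and4P[h1 h3 h7 h9].
  have Hperm : perm_eq s (nseq (count_mem 1 s - 5) 1 ++ [:: 1; 1; 1; 1; 1; 7; 9]).
    apply: perm_counts => //; first by rewrite all_cat; apply/andP; split; [rewrite all_nseq; apply/orP; right|].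
    move=> x; rewrite !inE => /or4P[]/eqP->; rewrite count_cat count_nseq /=; slia.
  have [H6 Hc] := famB_ok.
  exact: (kill (p := 7) isT Hp Hperm (famU_mem _ H6) Hc Hnz Hb7).
-
  exfalso. move: Hg; rewrite /famC /vec /= => /and4P[h9 h1 h3 h7].
  have Hperm : perm_eq s (nseq (count_mem 9 s - 5) 9 ++ [:: 1; 3; 9; 9; 9; 9; 9]).
    apply: perm_counts => //; first by rewrite all_cat; apply/andP; split; [rewrite all_nseq; apply/orP; right|].
    move=> x; rewrite !inE => /or4P[]/eqP->; rewrite count_cat count_nseq /=; slia.
  have [H6 Hc] := famC_ok.
  exact: (kill (p := 7) isT Hp Hperm (famU_mem _ H6) Hc Hnz Hb7).
-
  exfalso. case/hasP: Hg => m Hm /allP Heqc.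
  have /and4P[HmD /allP Hm6 Hsm /hasP[p Hp7 /andP[/andP[p1 p13] Hcov]]] := allP res_ok m Hm.
  have Hperm : perm_eq s ([::] ++ m).
    apply: perm_counts => // x hxD.
    move: hxD (Heqc x hxD) (Hm6 x hxD); rewrite /D !inE => /or4P[]/eqP->; rewrite /vec /=; slia.
  have Hsz' : size s = size m by rewrite (perm_size Hperm).
  have := pow100_ge (k := (size s).-1) ltac:(lia) => H100.
  apply: (kill p1 Hp Hperm _ Hcov Hnz); first by rewrite mod0n inE.
  apply: (leq_trans _ H100); lia.
Qed.

Theorem theorem1 (N : nat) :
  absolute_prime N -> 2 <= size (digits N) ->
  N = repunit (size (digits N)) \/
  exists a b : nat, [/\ a \in [:: 1; 3; 7; 9], b \in [:: 1; 3; 7; 9], a != b &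
    perm_eq (digits N) (digits (Bn (size (digits N)) a b))].
Proof.
move=> [_ Hp] H2.
have [Hv H10] := digits_ok N.
have := core Hp H10 H2. by rewrite Hv.
Qed.
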